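(* Let $k\ge1$, $1\le r\le 4k^2$, $\mathcal{B}=\mathcal{B}(2k,2k;r)$ and $G=D_4$. Then the number of equivalence classes of $\mathcal{B}$ under $G$ is \[|\mathcal{O}_G(\mathcal{B})|=\frac18\left(\binom{4k^2}{r}+2\binom{k^2}{\frac r4}+3\binom{2k^2}{\frac r2}+2\sum_{t=0}^{r}\binom{2k}{t}\binom{k(2k-1)}{\frac{r-t}{2}}\right).\]
   Context: $\mathcal{B}(2k,2k;r)$ is the set of all subsets of exactly $r$ cells (''boards'' with $r$ blocked cells) of a $2k\times 2k$ grid. The dihedral group $D_4$ of the 8 symmetries of the square (four rotations about the center and reflections across the horizontal midline, vertical midline and both diagonals) acts on boards; $\mathcal{O}_G(\mathcal{B})$ is the set of orbits (equivalence classes). Convention: a binomial coefficient $\binom{a}{b}$ is $0$ when $b$ is not a nonnegative integer or $b>a$. *)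

(* Defs.v *)
From mathcomp Require Import all_boot all_order all_algebra.
Set Implicit Arguments. Unset Strict Implicit. Unset Printing Implicit Defensive.

(* Cells of an n x n grid: (row, column), coordinates 0..n-1. *)
Definition cell (n : nat) := ('I_n * 'I_n)%type.

Definition d4 (n : nat) (g : 'I_8) (c : cell n) : cell n :=
  let: (i, j) := c in
  match val g with
  | 0 => (i, j)
  | 1 => (j, rev_ord i)                  (* rotation by 90 degrees *)
  | 2 => (rev_ord i, rev_ord j)          (* rotation by 180 degrees *)
  | 3 => (rev_ord j, i)                  (* rotation by 270 degrees *)
  | 4 => (rev_ord i, j)                  (* reflection across horizontal midline *)
  | 5 => (i, rev_ord j)                  (* reflection across vertical midline *)
  | 6 => (j, i)                          (* reflection across main diagonal *)
  | _ => (rev_ord j, rev_ord i)          (* reflection across anti-diagonal *)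
  end.

(* Action on boards (sets of blocked cells). *)
Definition d4_board (n : nat) (g : 'I_8) (B : {set cell n}) : {set cell n} :=
  [set d4 g c | c in B].

Definition boards (n r : nat) : {set {set cell n}} :=
  [set B : {set cell n} | #|B| == r].

Definition d4_equiv (n : nat) (B B' : {set cell n}) : bool :=
  [exists g : 'I_8, d4_board g B == B'].

Definition orbits (n r : nat) : {set {set {set cell n}}} :=
  [set [set B' in boards n r | d4_equiv B B'] | B in boards n r].

(* binomial C(a, num/den), taken to be 0 when num/den is not an integer *)
Definition binomq (a num den : nat) : nat :=
  if den %| num then 'C(a, num %/ den) else 0.

(* Main.v *)
Require Import Defs.
From mathcomp Require Import all_boot all_order all_algebra all_fingroup.
From mathcomp Require Import zify.
Set Implicit Arguments. Unset Strict Implicit. Unset Printing Implicit Defensive.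

Definition tab : seq (seq nat) := [:: [:: 0; 1; 2; 3; 4; 5; 6; 7]; [:: 1; 2; 3; 0; 7; 6; 4; 5]; [:: 2; 3; 0; 1; 5; 4; 7; 6]; [:: 3; 0; 1; 2; 6; 7; 5; 4]; [:: 4; 6; 5; 7; 0; 2; 1; 3]; [:: 5; 7; 4; 6; 2; 0; 3; 1]; [:: 6; 5; 7; 4; 3; 1; 0; 2]; [:: 7; 4; 6; 5; 1; 3; 2; 0]]%N.

Definition comp8 (g h : 'I_8) : 'I_8 := inord (nth 0 (nth [::] tab g) h).
Definition inv8 (g : 'I_8) : 'I_8 := inord (nth 0 [:: 0; 3; 2; 1; 4; 5; 6; 7] g).

Lemma d4_comp n g h (c : cell n) : d4 (comp8 g h) c = d4 h (d4 g c).
Proof.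
case: c => i j.
case: g => [[|[|[|[|[|[|[|[|g]]]]]]]] Hg] //;
case: h => [[|[|[|[|[|[|[|[|h]]]]]]]] Hh] //;
  by rewrite /comp8 /d4 /= (@inordK 7) //= ?rev_ordK.
Qed.

Lemma d4K n g : cancel (@d4 n g) (d4 (inv8 g)).
Proof.
case=> i j.
case: g => [[|[|[|[|[|[|[|[|g]]]]]]]] Hg] //;
  by rewrite /inv8 /d4 /= (@inordK 7) //= ?rev_ordK.
Qed.

Definition pd n g : {perm cell n} := perm (can_inj (@d4K n g)).

Lemma pdE n g c : pd n g c = d4 g c.
Proof. by rewrite permE. Qed.

Lemma pdM n g h : (pd n g * pd n h)%g = pd n (comp8 g h).
Proof. by apply/permP => c; rewrite permM !pdE d4_comp. Qed.

Lemma pd0 n : pd n ord0 = 1%g.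
Proof. by apply/permP => -[i j]; rewrite pdE perm1. Qed.

Definition D4 n := [set pd n g | g : 'I_8].

Lemma D4_gs n : group_set (D4 n).
Proof.
apply/group_setP; split; first by rewrite -(pd0 n); apply: imset_f.
move=> _ _ /imsetP[g _ ->] /imsetP[h _ ->]; rewrite pdM; exact: imset_f.
Qed.

Canonical D4grp n := Group (D4_gs n).

Lemma board_pd n g (B : {set cell n}) : d4_board g B = pd n g @: B.
Proof. by apply: eq_imset => c; rewrite pdE. Qed.

Lemma setactP T (a : {perm T}) (B : {set T}) : ('P^*)%act B a = a @: B.
Proof. by rewrite /= setactE; apply: eq_imset. Qed.

Lemma orbits_eq n r : orbits n r = orbit ('P^*)%act (D4grp n) @: boards n r.
Proof.
apply: eq_in_imset => B HB; apply/setP => B'.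
rewrite inE /orbit /d4_equiv; apply/andP/imsetP.
  case=> HB' /existsP[g /eqP <-]; exists (pd n g); first exact: imset_f.
  by rewrite setactP board_pd.
case=> _ /imsetP[g _ ->] ->; rewrite setactP; split.
  by move: HB; rewrite !inE (card_imset _ perm_inj).
by apply/existsP; exists g; rewrite board_pd.
Qed.

Definition fixc n r g := #|[set B : {set cell n} | (#|B| == r) && (pd n g @: B == B)]|.

Lemma pd_inj m : injective (pd m.+2).
Proof.
move=> g h E.
have E0 := congr1 (fun p : {perm _} => p (ord0, ord0)) E.
have E1 := congr1 (fun p : {perm _} => p (ord0, Ordinal (n:=m.+2) (m:=1) isT)) E.
move: E0 E1 => /=; rewrite !pdE => E0 E1; apply: val_inj; move: E0 E1; clear E.
case: g => [[|[|[|[|[|[|[|[|g]]]]]]]] Hg] //;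
case: h => [[|[|[|[|[|[|[|[|h]]]]]]]] Hh] //= ;
  move=> /pair_equal_spec [/(congr1 val) /= a1 /(congr1 val) /= a2]
         /pair_equal_spec [/(congr1 val) /= a3 /(congr1 val) /= a4]; lia.
Qed.

Lemma burnside0 m r : 8 * #|orbits m.+2 r| = \sum_(g < 8) fixc m.+2 r g.
Proof.
have acts : [acts D4grp m.+2, on boards m.+2 r | 'P^*].
  apply/actsP => a _ B; rewrite !inE setactP (card_imset _ perm_inj) //.
have := Frobenius_Cauchy acts.
rewrite -orbits_eq => FC.
have c8 : #|D4grp m.+2| = 8.
  by rewrite /= /D4 (card_imset _ (@pd_inj m)) card_ord.
rewrite mulnC -{1}c8 -FC /= /D4 big_imset /=; last by move=> g h _ _; apply: pd_inj.
apply: eq_bigr => g _; apply: eq_card => B.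
rewrite !inE; congr (_ && _).
by rewrite sub1set inE setactP.
Qed.

Lemma burnside n r : 1 < n -> 8 * #|orbits n r| = \sum_(g < 8) fixc n r g.
Proof. by case: n => [|[|m]] // _; apply: burnside0. Qed.

Section Generic.
Variable T : finType.
Variable s : {perm T}.

Lemma porbits_partition : partition (porbits s) [set: T].
Proof.
apply/and3P; split.
- apply/eqP/setP => x; rewrite inE; apply/bigcupP.
  by exists (porbit s x); [apply: imset_f | apply: porbit_id].
- apply/trivIsetP => A B /imsetP[x _ ->] /imsetP[y _ ->] neq.
  rewrite -setI_eq0; apply/eqP/setP => z; rewrite !inE; apply/andP => -[zx zy].
  have e1 : porbit s z = porbit s x by apply/eqP; rewrite eq_porbit_mem.
  have e2 : porbit s z = porbit s y by apply/eqP; rewrite eq_porbit_mem.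
  by rewrite -e1 -e2 eqxx in neq.
- apply/imsetP => -[x _ E]; have := porbit_id s x; by rewrite -E inE.
Qed.

Lemma porbits_triv : trivIset (porbits s).
Proof. by case/and3P: porbits_partition. Qed.

Lemma expS_apply i x : (s ^+ i.+1)%g x = s ((s ^+ i)%g x).
Proof. by rewrite expgSr permM. Qed.

Lemma inv_porbit (B : {set T}) x : s @: B = B -> x \in B -> porbit s x \subset B.
Proof.
move=> HB xB; apply/subsetP => y /porbitP[i ->].
elim: i => [|i IH]; first by rewrite expg0 perm1.
by rewrite expS_apply -HB; apply: imset_f.
Qed.

Lemma cover_inv (U : {set {set T}}) : U \subset porbits s -> s @: cover U = cover U.
Proof.
move=> HU; apply/eqP; rewrite eqEcard (card_imset _ perm_inj) leqnn andbT.
apply/subsetP => _ /imsetP[x /bigcupP[O OU xO] ->]; apply/bigcupP; exists O => //.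
have /imsetP[y _ Oy] := subsetP HU O OU; subst O.
by case/porbitP: xO => i ->; rewrite -expS_apply mem_porbit.
Qed.

Lemma cover_sub (U V : {set {set T}}) : U \subset porbits s -> V \subset porbits s ->
  cover U = cover V -> U \subset V.
Proof.
move=> HU HV E; apply/subsetP => O OU.
have /imsetP[x _ Ox] := subsetP HU O OU; subst O.
have : x \in cover V by rewrite -E; apply/bigcupP; exists (porbit s x) => //; apply: porbit_id.
case/bigcupP => O' O'V xO'.
have /imsetP[y _ O'y] := subsetP HV O' O'V; subst O'.
by rewrite (eqP (_ : porbit s x == porbit s y)) ?eq_porbit_mem.
Qed.

Lemma inv_cover (B : {set T}) : s @: B = B -> B = cover [set O in porbits s | O \subset B].
Proof.
move=> HB; apply/setP => x; apply/idP/bigcupP.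
  move=> xB; exists (porbit s x); last exact: porbit_id.
  by rewrite inE imset_f //= inv_porbit.
by case=> O; rewrite inE => /andP[_ /subsetP]; apply.
Qed.

Lemma count_inv r :
  #|[set B : {set T} | (#|B| == r) && (s @: B == B)]| =
  #|[set U in powerset (porbits s) | #|cover U| == r]|.
Proof.
rewrite -(@card_in_imset _ _ (@cover T)).
  apply: eq_card => B; rewrite inE; apply/andP/imsetP.
    case=> Br /eqP HB; exists [set O in porbits s | O \subset B]; last exact: inv_cover.
    rewrite !inE -inv_cover // Br andbT; apply/subsetP => O; by rewrite inE => /andP[].
  case=> U HU0 ->; move: HU0; rewrite inE powersetE => /andP[HU Ur]; split => //.
  by rewrite cover_inv.
move=> U V; rewrite !inE ?powersetE => /andP[HU _] /andP[HV _] E.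
by apply/eqP; rewrite eqEsubset (cover_sub HU HV E) (cover_sub HV HU (esym E)).
Qed.

Lemma card_cover (U : {set {set T}}) : U \subset porbits s -> #|cover U| = \sum_(O in U) #|O|.
Proof.
by move=> HU; have /eqP := trivIsetS HU porbits_triv.
Qed.

Lemma card_porbit_d d x : 0 < d -> iter d s x = x ->
  (forall i, 0 < i < d -> iter i s x != x) -> #|porbit s x| = d.
Proof.
move=> d0 Hd Hi.
have c0 : 0 < #|porbit s x| by rewrite lt0n card_porbit_neq0.
apply/eqP; rewrite eqn_leq; apply/andP; split.
  rewrite leqNgt; apply/negP => dc.
  have U := uniq_traject_porbit s x.
  have : nth x (traject s x #|porbit s x|) d == nth x (traject s x #|porbit s x|) 0.
    by rewrite !nth_traject // Hd.
  by rewrite nth_uniq ?size_traject //; case: (d) d0.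
rewrite leqNgt; apply/negP => cd.
by have := Hi #|porbit s x|; rewrite c0 cd iter_porbit eqxx => /(_ isT).
Qed.

End Generic.

Lemma sum_bool (X : finType) (A : {set X}) (P : pred X) :
  \sum_(x in A) (P x : nat) = #|[set x in A | P x]|.
Proof.
rewrite -sum1dep_card big_mkcondr /=; apply: eq_bigr => x _; by case: (P x).
Qed.

Lemma count_sub_mul (X : finType) (A : {set X}) d q : 0 < d ->
  #|[set U : {set X} | U \subset A & #|U| * d == q]| = binomq #|A| q d.
Proof.
move=> d0; rewrite /binomq; case: ifP => [/dvdnP [m ->]|nd].
  by rewrite mulnK // -cards_draws; apply: eq_card => U; rewrite !inE eqn_pmul2r.
apply/eqP; rewrite cards_eq0; apply/eqP/setP => U; rewrite !inE; apply/negbTE.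
by apply/andP => -[_ /eqP E]; move: nd; rewrite -E dvdn_mull.
Qed.

Lemma sum_card_powerset (X : finType) (A : {set X}) (G : nat -> nat) N :
  (forall t, N <= t -> G t = 0) ->
  \sum_(U in powerset A) G #|U| = \sum_(0 <= t < N) 'C(#|A|, t) * G t.
Proof.
move=> G0.
transitivity (\sum_(U in powerset A) \sum_(0 <= t < N) (#|U| == t) * G t).
  apply: eq_bigr => U _; case: (ltnP #|U| N) => h.
    rewrite big_mkord (bigD1 (Ordinal h)) //= eqxx mul1n big1 ?addn0 // => i.
    by rewrite -val_eqE /= eq_sym => /negbTE ->.
  rewrite G0 // big1_seq // => t; rewrite mem_index_iota => /andP[_ tN].
  by rewrite (gtn_eqF (leq_trans tN h)).
rewrite exchange_big /=; apply: eq_bigr => t _.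
rewrite -big_distrl /=; congr (_ * _).
rewrite (sum_bool _ (fun U : {set X} => #|U| == t)) -cards_draws; apply: eq_card => U; by rewrite !inE.
Qed.

Lemma inner_sum (X : finType) (A : {set X}) t r :
  \sum_(U in powerset A) ((t + #|U| * 2 == r) : nat) = (t <= r) * binomq #|A| (r - t) 2.
Proof.
case: leqP => tr.
  rewrite mul1n -count_sub_mul // sum_bool; apply: eq_card => U.
  by rewrite !inE -(eqn_add2l t (#|U| * 2) (r - t)) subnKC.
by rewrite mul0n big1 // => U _; rewrite (gtn_eqF (ltn_addr _ tr)).
Qed.

Lemma split_powerset (X : finType) (A1 A2 : {set X}) (Fn : {set X} -> {set X} -> nat) :
  [disjoint A1 & A2] ->
  \sum_(U in powerset (A1 :|: A2)) Fn (U :&: A1) (U :&: A2) =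
  \sum_(U1 in powerset A1) \sum_(U2 in powerset A2) Fn U1 U2.
Proof.
move=> /disjoint_setI0 D.
have nD x : x \in A1 -> x \in A2 -> False.
  by move=> h1 h2; have := in_set0 x; rewrite -D inE h1 h2.
have cap1 (U1 U2 : {set X}) : U1 \subset A1 -> U2 \subset A2 -> (U1 :|: U2) :&: A1 = U1.
  move=> /subsetP S1 /subsetP S2; apply/setP => x; rewrite !inE.
  case: (boolP (x \in U1)) => h1; first by rewrite S1.
  case: (boolP (x \in U2)) => h2 //=; case: (boolP (x \in A1)) => // h3.
  by case: (nD x h3 (S2 x h2)).
have cap2 (U1 U2 : {set X}) : U1 \subset A1 -> U2 \subset A2 -> (U1 :|: U2) :&: A2 = U2.
  move=> /subsetP S1 /subsetP S2; apply/setP => x; rewrite !inE.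
  case: (boolP (x \in U2)) => h2; first by rewrite S2 ?orbT.
  case: (boolP (x \in U1)) => h1 //=; case: (boolP (x \in A2)) => // h3.
  by case: (nD x (S1 x h1) h3).
rewrite pair_big_dep /=.
have -> : powerset (A1 :|: A2) = (fun p => p.1 :|: p.2) @: setX (powerset A1) (powerset A2).
  apply/setP => U; apply/idP/imsetP.
    rewrite inE => HU; exists (U :&: A1, U :&: A2).
      by rewrite in_setX !inE !subsetIr.
    by rewrite /= -setIUr (setIidPl HU).
  case=> -[U1 U2]; rewrite in_setX !inE /= => /andP[H1 H2] ->.
  by rewrite setUSS.
rewrite (big_imset (fun U => Fn (U :&: A1) (U :&: A2))) /=.
  apply: eq_big => -[U1 U2]; first by rewrite in_setX.
  by rewrite in_setX !inE /= => /andP[H1 H2]; rewrite cap1 // cap2.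
move=> [U1 U2] [V1 V2]; rewrite !in_setX !inE /= => /andP[H1 H2] /andP[H3 H4] E.
have := congr1 (fun U => U :&: A1) E; have := congr1 (fun U => U :&: A2) E.
by rewrite /= !cap1 // !cap2 // => -> ->.
Qed.

Section Counts.
Variable T : finType.
Variable s : {perm T}.

Lemma count_const d r : 0 < d -> (forall x, #|porbit s x| = d) ->
  #|[set B : {set T} | (#|B| == r) && (s @: B == B)]| = binomq (#|T| %/ d) r d.
Proof.
move=> d0 Hs.
have cardT : #|T| = #|porbits s| * d.
  rewrite -cardsT (card_partition (porbits_partition s)) -sum_nat_const.
  by apply: eq_bigr => _ /imsetP[x _ ->].
rewrite count_inv cardT mulnK // -count_sub_mul //; apply: eq_card => U.
rewrite !inE; case HU: (U \subset porbits s) => //=.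
rewrite (card_cover HU) (eq_bigr (fun _ => d)) ?sum_nat_const //.
by move=> O OU; have /imsetP[x _ ->] := subsetP HU O OU.
Qed.

Hypothesis ss : forall x, s (s x) = x.

Let F := [set x | s x == x].
Let P1 := [set O in porbits s | #|O| == 1].
Let P2 := [set O in porbits s | #|O| == 2].

Lemma sz x : #|porbit s x| = if s x == x then 1 else 2.
Proof.
case: eqP => h.
  apply: card_porbit_d => //= i; lia.
apply: card_porbit_d => //=.
case=> [|[|i]] //= _; exact/eqP.
Qed.

Lemma fix_iter x i : s x = x -> (s ^+ i)%g x = x.
Proof.
move=> h; elim: i => [|i IH]; first by rewrite expg0 perm1.
by rewrite expS_apply IH.
Qed.

Lemma sum_split (U : {set {set T}}) : U \subset porbits s ->
  \sum_(O in U) #|O| = #|U :&: P1| + #|U :&: P2| * 2.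
Proof.
move=> HU; rewrite (big_setID P1) /=; congr (_ + _).
  rewrite -sum1_card; apply: eq_bigr => O; rewrite !inE => /andP[_ /andP[_ /eqP ->]] //.
have -> : U :\: P1 = U :&: P2.
  apply/setP => O; rewrite !inE; case OU: (O \in U); rewrite ?andbT ?andbF //.
  have /imsetP[x _ ->] := subsetP HU O OU; rewrite sz imset_f //=.
  by case: (s x == x).
rewrite (eq_bigr (fun _ => 2)) ?sum_nat_const // => O; rewrite !inE => /andP[_ /andP[_ /eqP ->]] //.
Qed.

Lemma P1_sub : P1 \subset porbits s.
Proof. by apply/subsetP => O; rewrite inE => /andP[]. Qed.
Lemma P2_sub : P2 \subset porbits s.
Proof. by apply/subsetP => O; rewrite inE => /andP[]. Qed.

Lemma P12 : porbits s = P1 :|: P2.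
Proof.
apply/setP => O; rewrite !inE; case OP: (O \in porbits s) => //=.
by have /imsetP[x _ ->] := OP; rewrite sz; case: (s x == x).
Qed.

Lemma P12_disj : [disjoint P1 & P2].
Proof.
rewrite -setI_eq0; apply/eqP/setP => O; rewrite !inE.
by case: (O \in porbits s) => //=; case: (#|O|) => [|[|[|]]].
Qed.

Lemma cardP1 : #|P1| = #|F|.
Proof.
have -> : P1 = porbit s @: F.
  apply/setP => O; rewrite inE; apply/andP/imsetP.
    case=> /imsetP[x _ ->]; rewrite sz; case: (boolP (s x == x)) => // h _.
    by exists x; rewrite // inE h.
  case=> x; rewrite inE => /eqP h ->; split; first exact: imset_f.
  by rewrite sz h eqxx.
rewrite card_in_imset // => x y; rewrite !inE => /eqP hx /eqP hy E.
have : y \in porbit s x by rewrite E porbit_id.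
by case/porbitP => i ->; rewrite fix_iter.
Qed.

Lemma cardT2 : #|T| = #|F| + #|P2| * 2.
Proof.
rewrite -cardsT (card_partition (porbits_partition s)) sum_split //.
by rewrite (setIidPr P1_sub) (setIidPr P2_sub) cardP1.
Qed.

Lemma count_invol r :
  #|[set B : {set T} | (#|B| == r) && (s @: B == B)]| =
  \sum_(0 <= t < r.+1) 'C(#|F|, t) * binomq ((#|T| - #|F|) %/ 2) (r - t) 2.
Proof.
have -> : (#|T| - #|F|) %/ 2 = #|P2| by rewrite cardT2 addKn mulnK.
rewrite count_inv -cardP1.
transitivity (\sum_(U in powerset (P1 :|: P2)) ((#|U :&: P1| + #|U :&: P2| * 2 == r) : nat)).
  rewrite -P12 -sum_bool; apply: eq_bigr => U; rewrite inE => HU.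
  by rewrite (card_cover HU) sum_split.
rewrite (split_powerset (fun U1 U2 => ((#|U1| + #|U2| * 2 == r) : nat))) ?P12_disj //.
rewrite (eq_bigr (fun U1 : {set {set T}} => (#|U1| <= r) * binomq #|P2| (r - #|U1|) 2)); last first.
  by move=> U1 _; rewrite inner_sum.
rewrite (@sum_card_powerset _ _ (fun t => (t <= r) * binomq #|P2| (r - t) 2) r.+1).
  apply: eq_big_nat => t /andP[_ tr]; by rewrite -ltnS tr mul1n.
by move=> t rt; rewrite leqNgt rt.
Qed.

End Counts.

Definition d4n n (g : nat) (c : cell n) : cell n :=
  let: (i, j) := c in
  match g with
  | 0 => (i, j)
  | 1 => (j, rev_ord i)
  | 2 => (rev_ord i, rev_ord j)
  | 3 => (rev_ord j, i)
  | 4 => (rev_ord i, j)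
  | 5 => (i, rev_ord j)
  | 6 => (j, i)
  | _ => (rev_ord j, rev_ord i)
  end.

Lemma pdN n (g : 'I_8) c : pd n g c = d4n g c.
Proof. by rewrite pdE; case: c. Qed.

Section Concrete.
Variable k : nat.
Hypothesis k0 : 0 < k.
Local Notation n := (2 * k).

Lemma cardT : #|{: cell n}| = n * n.
Proof. by rewrite card_prod card_ord. Qed.

Ltac neqtac := move=> /eqP /pair_equal_spec [/(congr1 val) /= ? /(congr1 val) /= ?].

Lemma fix0 r (g : 'I_8) : (g : nat) = 0 -> fixc n r g = 'C(4 * k ^ 2, r).
Proof.
move=> hg; rewrite /fixc (@count_const _ _ 1) //.
  by rewrite /binomq dvd1n divn1 cardT divn1; congr 'C(_, _); rewrite expnS expn1; lia.
move=> x; apply: card_porbit_d => //=; first by rewrite pdN hg; case: x.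
move=> i; lia.
Qed.

Lemma fix13 r (g : 'I_8) : ((g : nat) = 1 \/ (g : nat) = 3) -> fixc n r g = binomq (k ^ 2) r 4.
Proof.
move=> hg; rewrite /fixc (@count_const _ _ 4) //.
  by rewrite cardT (_ : n * n = k ^ 2 * 4) ?mulnK //; rewrite expnS expn1; lia.
move=> [i j]; have := ltn_ord i; have := ltn_ord j => hi hj.
apply: card_porbit_d => //=.
  by rewrite !pdN; case: hg => ->; rewrite /= !rev_ordK.
case=> [|[|[|[|m]]]] //= _; rewrite !pdN; case: hg => -> /=; apply/negP; neqtac; lia.
Qed.

Lemma fix245 r (g : 'I_8) : ((g : nat) = 2 \/ (g : nat) = 4 \/ (g : nat) = 5) ->
  fixc n r g = binomq (2 * k ^ 2) r 2.
Proof.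
move=> hg; rewrite /fixc (@count_const _ _ 2) //.
  by rewrite cardT (_ : n * n = (2 * k ^ 2) * 2) ?mulnK //; rewrite expnS expn1; lia.
move=> [i j]; have := ltn_ord i; have := ltn_ord j => hi hj.
apply: card_porbit_d => //=.
  by rewrite !pdN; case: hg => [->|[->|->]]; rewrite /= !rev_ordK.
case=> [|[|m]] //= _; rewrite !pdN; case: hg => [->|[->|->]] /=; apply/negP; neqtac; lia.
Qed.

Lemma fix67 r (g : 'I_8) : ((g : nat) = 6 \/ (g : nat) = 7) ->
  fixc n r g = \sum_(0 <= t < r.+1) 'C(2 * k, t) * binomq (k * (2 * k - 1)) (r - t) 2.
Proof.
move=> hg; rewrite /fixc count_invol; last first.
  by move=> [i j]; rewrite !pdN; case: hg => -> /=; rewrite ?rev_ordK.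
have cF : #|[set x | pd n g x == x]| = n.
  case: hg => hg.
    have -> : [set x | pd n g x == x] = [set (i, i) | i : 'I_n].
      apply/setP => -[i j]; rewrite inE pdN hg /=; apply/eqP/imsetP.
        by move/pair_equal_spec => [-> _]; exists i.
      by case=> l _ /pair_equal_spec [-> ->].
    by rewrite card_imset ?card_ord // => a b /pair_equal_spec [].
  have -> : [set x | pd n g x == x] = [set (i, rev_ord i) | i : 'I_n].
    apply/setP => -[i j]; rewrite inE pdN hg /=; apply/eqP/imsetP.
      by move/pair_equal_spec => [_ e2]; exists i; rewrite ?e2.
    by case=> l _ /pair_equal_spec [-> ->]; rewrite rev_ordK.
  by rewrite card_imset ?card_ord // => a b /pair_equal_spec [].
rewrite cF cardT (_ : n * n - n = k * (2 * k - 1) * 2) ?mulnK //.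
nia.
Qed.

End Concrete.

Definition hval k r (i : nat) : nat :=
  match i with
  | 0 => 'C(4 * k ^ 2, r)
  | 1 | 3 => binomq (k ^ 2) r 4
  | 2 | 4 | 5 => binomq (2 * k ^ 2) r 2
  | _ => \sum_(0 <= t < r.+1) 'C(2 * k, t) * binomq (k * (2 * k - 1)) (r - t) 2
  end.

Lemma fix_all k r (g : 'I_8) : 0 < k -> fixc (2 * k) r g = hval k r g.
Proof.
move=> k0; case: g => [[|[|[|[|[|[|[|[|g]]]]]]]] Hg] //.
- by rewrite fix0.
- by rewrite fix13 //; left.
- by rewrite fix245 //; left.
- by rewrite fix13 //; right.
- by rewrite fix245 //; right; left.
- by rewrite fix245 //; right; right.
- by rewrite fix67 //; left.
- by rewrite fix67 //; right.
Qed.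

Import GRing.Theory Num.Theory.
Local Open Scope ring_scope.

Theorem proposition5p1 (k r : nat) :
  (1 <= k)%N -> (1 <= r <= 4 * k ^ 2)%N ->
  (#|orbits (2 * k) r|)%:R =
    (1 / 8 : rat) *
    ('C(4 * k ^ 2, r) + 2 * binomq (k ^ 2) r 4 + 3 * binomq (2 * k ^ 2) r 2
     + 2 * \sum_(0 <= t < r.+1) 'C(2 * k, t) * binomq (k * (2 * k - 1)) (r - t) 2)%N%:R.
Proof.
move=> k0 _.
have n1 : (1 < 2 * k)%N by rewrite (leq_trans _ (leq_mul (leqnn 2) k0)).
have B := burnside r n1.
rewrite (eq_bigr (fun g : 'I_8 => hval k r g)) in B; last by move=> g _; rewrite fix_all.
rewrite !big_ord_recl big_ord0 /= in B.
have -> : ('C(4 * k ^ 2, r) + 2 * binomq (k ^ 2) r 4 + 3 * binomq (2 * k ^ 2) r 2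
     + 2 * \sum_(0 <= t < r.+1) 'C(2 * k, t) * binomq (k * (2 * k - 1)) (r - t) 2)%N
   = (8 * #|orbits (2 * k) r|)%N.
  rewrite B; set a := 'C(_, _); set b := binomq _ _ 4; set c := binomq _ _ 2; set d := \sum_(_ <= _ < _) _.
  rewrite !mulSn !mul0n !addn0 !addnA; lia.
by rewrite natrM mulrA mul1r mulVf // mul1r.
Qed.
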